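(* Assume the setting of the previous statements: $C\subseteq\mathbb{R}^n$ nonempty closed convex; $F$ continuously differentiable; $x^*$ a solution of VIP$(F,C)$; a neighborhood $X$ of $x^*$ and constants $L_1,L_2,\mu>0$ with $\|F(x)-F(y)\|\le L_1\|x-y\|$, $\|\nabla F(x)-\nabla F(y)\|\le L_2\|x-y\|$ for $x,y\in X$ and $\langle\nabla F(x)d,d\rangle\ge\mu\|d\|^2$ for $x\in X$, $d\in\mathbb{R}^n$; sequences $\{x_k\}\subset C$ with $x_k\to x^*$, $B_k$, $\mu_k>0$, $\rho_k\ge0$, $\delta_k>0$, inexact solutions $z_k\in C$ and exact solutions $\hat z_k$ of VIP$(\varphi_k,C)$; constants $D,C_1,C_2>0$ such that for all sufficiently large $k$: $\|B_k-\nabla F(x_k)\|\le D$; $\mu_k=O(r_k)$, $\mu_k\le C_1\|x_k-x^*\|$, $\rho_k\to0$; $B_k+\mu_kI$ positive definite with $(1+\|B_k+\mu_kI\|)/c_k\le C_2$; $\|(B_k-\nabla F(x_k))(z_k-x_k)\|\le\delta_k\|z_k-x_k\|$, $\mu_k<\mu/2$, $\delta_k\le\mu/16$. Assume moreover that $F$ is strongly monotone on $C$ with modulus $\mu$ and that $0<\alpha<2\mu$, and let $\gamma\in(0,1)$. Then there exist a constant $\delta$ with $0<\delta<\mu/16$ and a neighborhood $X'$ of $x^*$ such that for all sufficiently large $k$ with $x_k\in X'$ and $\delta_k\le\delta$, one has $f_\alpha(z_k)\le\gamma f_\alpha(x_k)$.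
   Context: VIP$(F,C)$: find $x^*\in C$ with $\langle F(x^* ),x-x^*\rangle\ge0$ for all $x\in C$. $P_C$ is the Euclidean projection onto $C$. $r_k=\|x_k-P_C(x_k-F(x_k))\|$. $F$ is strongly monotone on $C$ with modulus $\mu$ if $\langle F(x)-F(y),x-y\rangle\ge\mu\|x-y\|^2$ for all $x,y\in C$. For $\alpha>0$ the merit function is $f_\alpha(x)=\max_{y\in C}\{-\langle F(x),y-x\rangle-\tfrac{\alpha}{2}\|y-x\|^2\}$. For each $k$, $\varphi_k(z)=F(x_k)+(B_k+\mu_kI)(z-x_k)$; $\hat z_k\in C$ is the unique solution of VIP$(\varphi_k,C)$: $\langle\varphi_k(\hat z_k),x-\hat z_k\rangle\ge0$ for all $x\in C$. With $e_k=z_k-P_C(z_k-\varphi_k(z_k))$, the inexact solutions $z_k\in C$ satisfy $\|e_k\|\le\rho_k\mu_k\|z_k-x_k\|$ and $\langle e_k,\varphi_k(z_k)+z_k-x_k\rangle\le\rho_k\mu_k\|z_k-x_k\|^2$. $c_k$ is the smallest eigenvalue of the symmetric part of $B_k+\mu_kI$. *)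

(* Defs.v *)
From HB Require Import structures.
From mathcomp Require Import all_boot all_order all_algebra.
From mathcomp Require Import boolp classical_sets reals.
Set Implicit Arguments. Unset Strict Implicit. Unset Printing Implicit Defensive.
Import Order.TTheory GRing.Theory Num.Theory.
Local Open Scope ring_scope.
Local Open Scope classical_set_scope.

Section Defs.
Variables (R : realType) (n : nat).
Notation vec := 'cV[R]_n.
Notation mat := 'M[R]_n.

Definition dotv (u v : vec) : R := \sum_(i < n) u i 0 * v i 0.
Definition enorm (u : vec) : R := Num.sqrt (dotv u u).

Definition opnorm (A : mat) : R :=
  sup [set enorm (A *m v) | v in [set v : vec | enorm v <= 1]].

Definition sympart (A : mat) : mat := 2^-1 *: (A + A^T).
Definition min_eig_sym (A : mat) : R :=
  inf [set a : R | eigenvalue (sympart A) a].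

Definition closed_set (C : set vec) : Prop :=
  forall x, (forall eps : R, 0 < eps -> exists2 y, C y & enorm (x - y) < eps) -> C x.
Definition convex_set (C : set vec) : Prop :=
  forall x y (t : R), C x -> C y -> 0 <= t <= 1 -> C (t *: x + (1 - t) *: y).

(* Euclidean projection onto C (nearest point; unique for nonempty closed convex C) *)
Definition projC (C : set vec) (x : vec) : vec :=
  xget 0 [set y | C y /\ forall z, C z -> enorm (x - y) <= enorm (x - z)].

Definition is_VIP_sol (F : vec -> vec) (C : set vec) (xs : vec) : Prop :=
  C xs /\ forall x, C x -> 0 <= dotv (F xs) (x - xs).

Definition strongly_monotone_on (F : vec -> vec) (C : set vec) (mu : R) : Prop :=
  forall x y, C x -> C y -> dotv (F x - F y) (x - y) >= mu * enorm (x - y) ^+ 2.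

Definition residual (F : vec -> vec) (C : set vec) (x : vec) : R :=
  enorm (x - projC C (x - F x)).

Definition merit (F : vec -> vec) (C : set vec) (alpha : R) (x : vec) : R :=
  sup [set - dotv (F x) (y - x) - alpha / 2 * enorm (y - x) ^+ 2 | y in C].

Definition linmap (F : vec -> vec) (xk : vec) (Bk : mat) (muk : R) (z : vec) : vec :=
  F xk + (Bk + muk%:M) *m (z - xk).

End Defs.

(* Main.v *)
Require Import Defs.
From HB Require Import structures.
From mathcomp Require Import all_boot all_order all_algebra.
From mathcomp Require Import boolp classical_sets reals.
From mathcomp Require Import ring lra.
Import Order.TTheory GRing.Theory Num.Theory.
Local Open Scope ring_scope.
Local Open Scope classical_set_scope.

Lemma dotvC {R : realType} {n : nat} (u v : 'cV[R]_n) : dotv u v = dotv v u.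
Proof. by apply: eq_bigr => i _; rewrite mulrC. Qed.

Lemma dotvDl {R : realType} {n : nat} (u v w : 'cV[R]_n) :
  dotv (u + v) w = dotv u w + dotv v w.
Proof. by rewrite /dotv -big_split; apply: eq_bigr => i _; rewrite mxE mulrDl. Qed.

Lemma dotvNl {R : realType} {n : nat} (u w : 'cV[R]_n) :
  dotv (- u) w = - dotv u w.
Proof. by rewrite /dotv -sumrN; apply: eq_bigr => i _; rewrite mxE mulNr. Qed.

Lemma dotvZl {R : realType} {n : nat} (a : R) (u w : 'cV[R]_n) :
  dotv (a *: u) w = a * dotv u w.
Proof. by rewrite /dotv mulr_sumr; apply: eq_bigr => i _; rewrite mxE mulrA. Qed.

Lemma dotvBl {R : realType} {n : nat} (u v w : 'cV[R]_n) :
  dotv (u - v) w = dotv u w - dotv v w.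
Proof. by rewrite dotvDl dotvNl. Qed.

Lemma dotvDr {R : realType} {n : nat} (u v w : 'cV[R]_n) :
  dotv w (u + v) = dotv w u + dotv w v.
Proof. by rewrite !(dotvC w) dotvDl. Qed.

Lemma dotvNr {R : realType} {n : nat} (u w : 'cV[R]_n) :
  dotv w (- u) = - dotv w u.
Proof. by rewrite !(dotvC w) dotvNl. Qed.

Lemma dotvBr {R : realType} {n : nat} (u v w : 'cV[R]_n) :
  dotv w (u - v) = dotv w u - dotv w v.
Proof. by rewrite dotvDr dotvNr. Qed.

Lemma dotvZr {R : realType} {n : nat} (a : R) (u w : 'cV[R]_n) :
  dotv w (a *: u) = a * dotv w u.
Proof. by rewrite !(dotvC w) dotvZl. Qed.

Lemma dotv0l {R : realType} {n : nat} (w : 'cV[R]_n) : dotv 0 w = 0.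
Proof. by rewrite /dotv big1 // => i _; rewrite mxE mul0r. Qed.

Lemma dotv0r {R : realType} {n : nat} (w : 'cV[R]_n) : dotv w 0 = 0.
Proof. by rewrite dotvC dotv0l. Qed.

Lemma dotv_ge0 {R : realType} {n : nat} (u : 'cV[R]_n) : 0 <= dotv u u.
Proof. by apply: sumr_ge0 => i _; rewrite -expr2 sqr_ge0. Qed.

Lemma dotv_eq0 {R : realType} {n : nat} (u : 'cV[R]_n) : dotv u u = 0 -> u = 0.
Proof.
move=> h; apply/matrixP => i j; rewrite (ord1 j) mxE.
have hp : forall k : 'I_n, true -> 0 <= u k 0 * u k 0.
  by move=> k _; rewrite -expr2 sqr_ge0.
have := @psumr_eq0P _ _ _ _ hp h i isT.
by move=> /eqP; rewrite mulf_eq0 orbb => /eqP.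
Qed.

Lemma enorm_ge0 {R : realType} {n : nat} (u : 'cV[R]_n) : 0 <= enorm u.
Proof. exact: sqrtr_ge0. Qed.

Lemma enorm_sq {R : realType} {n : nat} (u : 'cV[R]_n) : enorm u ^+ 2 = dotv u u.
Proof. by rewrite sqr_sqrtr // dotv_ge0. Qed.

Lemma enorm_eq0 {R : realType} {n : nat} {u : 'cV[R]_n} : enorm u = 0 -> u = 0.
Proof. by move=> h; apply: dotv_eq0; rewrite -enorm_sq h expr0n. Qed.

Lemma enorm0 {R : realType} {n : nat} : enorm (0 : 'cV[R]_n) = 0.
Proof. by rewrite /enorm dotv0l sqrtr0. Qed.

Lemma CS {R : realType} {n : nat} (u v : 'cV[R]_n) : dotv u v <= enorm u * enorm v.
Proof.
set a := enorm u; set b := enorm v.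
have ha : 0 <= a := enorm_ge0 u. have hb : 0 <= b := enorm_ge0 v.
have h := dotv_ge0 (b *: u - a *: v).
rewrite !(dotvBl, dotvBr, dotvZl, dotvZr) (dotvC v u) -!enorm_sq -/a -/b in h.
have [ab0|ab0] := eqVneq (a * b) 0.
  move: ab0 => /eqP; rewrite mulf_eq0 => /orP [/eqP|/eqP] h0.
    by rewrite (@enorm_eq0 _ _ u h0) dotv0l -/a h0 mul0r.
  by rewrite (@enorm_eq0 _ _ v h0) dotv0r -/b h0 mulr0.
have abp : 0 < a * b by rewrite lt_def ab0 mulr_ge0.
nra.
Qed.

Lemma enormN {R : realType} {n : nat} (u : 'cV[R]_n) : enorm (- u) = enorm u.
Proof. by rewrite /enorm dotvNl dotvNr opprK. Qed.

Lemma enormB {R : realType} {n : nat} (u v : 'cV[R]_n) : enorm (u - v) = enorm (v - u).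
Proof. by rewrite -enormN opprB. Qed.

Lemma CSN {R : realType} {n : nat} (u v : 'cV[R]_n) : - dotv u v <= enorm u * enorm v.
Proof. by rewrite -dotvNl -(enormN u) CS. Qed.

Lemma sq_le {R : realType} (a b : R) : 0 <= b -> a ^+ 2 <= b ^+ 2 -> a <= b.
Proof. move=> hb h. nra. Qed.

Lemma enormD {R : realType} {n : nat} (u v : 'cV[R]_n) :
  enorm (u + v) <= enorm u + enorm v.
Proof.
apply: sq_le; first by rewrite addr_ge0 // enorm_ge0.
rewrite enorm_sq !(dotvDl, dotvDr) (dotvC v u) -!enorm_sq.
have := CS u v; lra.
Qed.

Lemma enormZ {R : realType} {n : nat} (a : R) (u : 'cV[R]_n) :
  enorm (a *: u) = `|a| * enorm u.
Proof.
by rewrite /enorm dotvZl dotvZr mulrA -expr2 sqrtrM ?sqr_ge0 // sqrtr_sqr.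
Qed.

Lemma coord_le {R : realType} {n : nat} (u : 'cV[R]_n) (i : 'I_n) :
  u i 0 ^+ 2 <= dotv u u.
Proof.
rewrite /dotv (bigD1 i) //= -expr2 lerDl.
by apply: sumr_ge0 => k _; rewrite -expr2 sqr_ge0.
Qed.

Lemma mulmx_bound {R : realType} {n : nat} (M : 'M[R]_n) :
  exists K : R, 0 <= K /\ forall v, enorm (M *m v) <= K * enorm v.
Proof.
pose r (i : 'I_n) : 'cV[R]_n := \col_j M i j.
pose K2 := \sum_(i < n) dotv (r i) (r i).
have K2ge : 0 <= K2 by apply: sumr_ge0 => i _; apply: dotv_ge0.
exists (Num.sqrt K2); split; first exact: sqrtr_ge0.
move=> v; apply: sq_le; first by rewrite mulr_ge0 ?sqrtr_ge0 ?enorm_ge0.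
rewrite exprMn !enorm_sq sqr_sqrtr // /dotv mulr_suml.
apply: ler_sum => i _.
have e : (M *m v) i 0 = dotv (r i) v.
  by rewrite mxE /dotv; apply: eq_bigr => j _; rewrite mxE.
rewrite e -/(dotv (r i) (r i)) -/(dotv v v) -(enorm_sq (r i)) -(enorm_sq v).
have h1 := CS (r i) v; have h2 := CSN (r i) v.
have := enorm_ge0 (r i); have := enorm_ge0 v. nra.
Qed.

Lemma opnorm_le {R : realType} {n : nat} (M : 'M[R]_n) (v : 'cV[R]_n) :
  enorm (M *m v) <= opnorm M * enorm v.
Proof.
have [K [K0 hK]] := mulmx_bound M.
set S := [set enorm (M *m w) | w in [set w : 'cV[R]_n | enorm w <= 1]].
have hS : has_sup S.
  split; first by exists (enorm (M *m 0)), 0 => //=; rewrite enorm0 ler01.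
  exists K => _ [w /= hw <-]; apply: le_trans (hK w) _.
  by rewrite -[leRHS]mulr1 ler_wpM2l.
have [v0|v0] := eqVneq (enorm v) 0.
  by rewrite (enorm_eq0 v0) mulmx0 !enorm0 mulr0.
have vp : 0 < enorm v by rewrite lt_def v0 enorm_ge0.
have h : enorm (M *m ((enorm v)^-1 *: v)) <= opnorm M.
  apply: (sup_upper_bound hS); exists ((enorm v)^-1 *: v) => //=.
  by rewrite enormZ ger0_norm ?invr_ge0 ?enorm_ge0 // mulVf.
rewrite -scalemxAr enormZ ger0_norm ?invr_ge0 ?enorm_ge0 // in h.
by rewrite -ler_pdivrMr // mulrC.
Qed.

Lemma tpos {R : realType} (m : nat) : 0 < (m.+1%:R : R)^-1.
Proof. by rewrite invr_gt0 ltr0Sn. Qed.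

Lemma tle {R : realType} (m l : nat) : (m <= l)%N -> (l.+1%:R : R)^-1 <= (m.+1%:R)^-1.
Proof. by move=> h; rewrite lef_pV2 ?posrE ?ltr0Sn // ler_nat ltnS. Qed.

Lemma proj_exists {R : realType} {n : nat} (C : set 'cV[R]_n) (y : 'cV[R]_n) :
  (exists c, C c) -> closed_set C -> convex_set C ->
  exists p, C p /\ forall c, C c -> enorm (y - p) <= enorm (y - c).
Proof.
move=> [c0 Cc0] clC cvC.
pose E := [set dotv (y - c) (y - c) | c in C].
have hinf : has_inf E.
  split; first by exists (dotv (y - c0) (y - c0)), c0.
  by exists 0 => _ [c _ <-]; apply: dotv_ge0.
pose d2 := inf E.
pose t (m : nat) : R := (m.+1%:R)^-1.
have tp m : 0 < t m by apply: tpos.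
have lbd c : C c -> d2 <= dotv (y - c) (y - c).
  by move=> Cc; apply: (ge_inf hinf.2); exists c.
have ex m : exists c, C c /\ dotv (y - c) (y - c) < d2 + t m ^+ 2.
  have [e [c Cc <-] he] := inf_adherent (exprn_gt0 2 (tp m)) hinf.
  by exists c.
have [cs hcs] := choice ex.
have par m l : (m <= l)%N -> dotv (cs m - cs l) (cs m - cs l) <= 4 * t m ^+ 2.
  move=> hml.
  pose mid := 2^-1 *: cs m + (1 - 2^-1) *: cs l.
  have Cmid : C mid.
    apply: cvC; [exact: (hcs m).1 | exact: (hcs l).1 |].
    by rewrite invr_ge0 ler0n /= invf_le1 // ler1n.
  have h1 := lbd _ Cmid.
  have h2 := (hcs m).2. have h3 := (hcs l).2.
  have h4 : t l ^+ 2 <= t m ^+ 2.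
    have hh : t l <= t m := tle m l hml.
    have := tp l; nra.
  have id : dotv (cs m - cs l) (cs m - cs l) =
    2 * dotv (y - cs m) (y - cs m) + 2 * dotv (y - cs l) (y - cs l)
    - 4 * dotv (y - mid) (y - mid).
    rewrite /mid !(dotvBl, dotvBr, dotvDl, dotvDr, dotvZl, dotvZr, dotvNl, dotvNr).
    rewrite (dotvC (cs m) y) (dotvC (cs l) y) (dotvC (cs l) (cs m)).

    lra.
  rewrite id; lra.
pose b m := 2 * t m.
have cd (i : 'I_n) m l : cs m i 0 - cs l i 0 <= b m + b l.
  have bm := tp m; have bl := tp l.
  case: (leqP m l) => hml.
    have := par m l hml; have := coord_le (cs m - cs l) i; rewrite !mxE => h1 h2.
    rewrite /b; nra.
  have := par l m (ltnW hml); have := coord_le (cs l - cs m) i; rewrite !mxE => h1 h2.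
  rewrite /b; nra.
pose Lf (i : 'I_n) := sup [set cs m i 0 - b m | m in [set: nat]].
have hsup i : has_sup [set cs m i 0 - b m | m in [set: nat]].
  split; first by exists (cs 0%N i 0 - b 0%N), 0%N.
  exists (cs 0%N i 0 + b 0%N) => _ [m _ <-]; have := cd i m 0%N; lra.
have lo i m : cs m i 0 - b m <= Lf i.
  by apply: (sup_upper_bound (hsup i)); exists m.
have hi i m : Lf i <= cs m i 0 + b m.
  apply: ge_sup; first by exists (cs 0%N i 0 - b 0%N), 0%N.
  move=> _ [l _ <-]; have := cd i l m; lra.
pose L : 'cV[R]_n := \col_i Lf i.
pose N1 : R := n.+1%:R.
have N1e : N1 = n%:R + 1 by rewrite /N1 -natr1.
have n0 : 0 <= (n%:R : R) by rewrite ler0n.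
have dist m : enorm (cs m - L) <= N1 * b m.
  have bm : 0 <= b m by rewrite /b; have := tp m; lra.
  apply: sq_le; first by rewrite mulr_ge0 // N1e; lra.
  have h : dotv (cs m - L) (cs m - L) <= n%:R * b m ^+ 2.
    rewrite mulr_natl -[X in _ *+ X]card_ord -sumr_const /dotv.
    apply: ler_sum => i _; rewrite !mxE.
    have := lo i m; have := hi i m; nra.
  rewrite enorm_sq; rewrite N1e; nra.
have small e : 0 < e -> exists m, t m < e.
  by move=> he; have [k hk] := ltr_add_invr he; exists k; rewrite add0r in hk.
have N1p : 0 < N1 by rewrite N1e; lra.
have CL : C L.
  apply: clC => e he.
  have h2N : 0 < 2 * N1 by lra.
  have [m hm] := small (e / (2 * N1)) (divr_gt0 he h2N).
  exists (cs m); first exact: (hcs m).1.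
  rewrite enormB; apply: (le_lt_trans (dist m)).
  move: hm; rewrite ltr_pdivlMr ?mulr_gt0 //; rewrite /b; lra.
exists L; split => // c Cc.
case: (leP (enorm (y - L)) (enorm (y - c))) => // hlt.
pose g := enorm (y - L) - enorm (y - c).
have gp : 0 < g by rewrite /g subr_gt0.
have h2N : 0 < 2 * N1 + 1 by lra.
have [m hm] := small (g / (2 * N1 + 1)) (divr_gt0 gp h2N).
have h1 : enorm (y - cs m) <= enorm (y - c) + t m.
  apply: sq_le; first by rewrite addr_ge0 ?enorm_ge0 // ltW.
  rewrite enorm_sq; have := (hcs m).2; have := lbd c Cc; rewrite -enorm_sq.
  have := tp m; have := enorm_ge0 (y - c); nra.
have h2 : enorm (y - L) <= enorm (y - cs m) + enorm (cs m - L).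
  have -> : y - L = (y - cs m) + (cs m - L) by rewrite addrA subrK.
  exact: enormD.
have := dist m; move: hm; rewrite ltr_pdivlMr ?addr_gt0 ?mulr_gt0 //.
rewrite /b /g; lra.
Qed.


Lemma proj_vi {R : realType} {n : nat} (C : set 'cV[R]_n) (y : 'cV[R]_n) :
  (exists c, C c) -> closed_set C -> convex_set C ->
  C (projC C y) /\ forall c, C c -> dotv (y - projC C y) (c - projC C y) <= 0.
Proof.
move=> ne clC cvC.
have [p0 hp0] := proj_exists C y ne clC cvC.
have [Cp hmin] : C (projC C y) /\ forall c, C c -> enorm (y - projC C y) <= enorm (y - c).
  exact: (@xgetI _ 0 [set q | C q /\ forall z, C z -> enorm (y - q) <= enorm (y - z)] p0 hp0).
split => // c Cc.
set p := projC C y in Cp hmin *.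
set a := dotv (y - p) (c - p).
case: (leP a 0) => // ap.
set Q := dotv (c - p) (c - p).
have Q0 : 0 <= Q by apply: dotv_ge0.
pose t := a / (a + Q).
have aQ : 0 < a + Q by lra.
have tp : 0 < t by rewrite divr_gt0.
have ht : t * (a + Q) = a by rewrite /t mulfVK // gt_eqF.
have t1 : t <= 1 by rewrite ler_pdivrMr // mul1r; lra.
have Cpt := cvC c p t Cc Cp (introT andP (conj (ltW tp) t1)).
have h := hmin _ Cpt.
have h2 : dotv (y - p) (y - p) <= dotv (y - (t *: c + (1 - t) *: p)) (y - (t *: c + (1 - t) *: p)).
  rewrite -!enorm_sq; apply: lerXn2r => //; rewrite ?nnegrE ?enorm_ge0 //.
have e : y - (t *: c + (1 - t) *: p) = (y - p) - t *: (c - p).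
  by apply/matrixP => i j; rewrite !mxE; ring.
rewrite e in h2.
move: h2 (erefl a) (erefl Q); rewrite {1}/a {1}/Q.
move: (y - p) (c - p) => u q h2 ea eQ.
rewrite !(dotvBl, dotvBr, dotvZl, dotvZr) (dotvC q u) ea eQ in h2.
have : t * (t * (a + Q)) = t * a by rewrite ht.
nra.
Qed.

Lemma merit_le {R : realType} {n : nat} (F : 'cV[R]_n -> 'cV[R]_n) (C : set 'cV[R]_n)
  (alpha : R) (x : 'cV[R]_n) (U : R) : (exists c, C c) ->
  (forall y, C y -> - dotv (F x) (y - x) - alpha / 2 * enorm (y - x) ^+ 2 <= U) ->
  merit F C alpha x <= U.
Proof.
move=> [c Cc] h; apply: ge_sup; first by exists (- dotv (F x) (c - x) - alpha / 2 * enorm (c - x) ^+ 2), c.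
by move=> _ [y Cy <-]; apply: h.
Qed.

Lemma merit_ge {R : realType} {n : nat} (F : 'cV[R]_n -> 'cV[R]_n) (C : set 'cV[R]_n)
  (alpha : R) (x y : 'cV[R]_n) : 0 < alpha -> C y ->
  - dotv (F x) (y - x) - alpha / 2 * enorm (y - x) ^+ 2 <= merit F C alpha x.
Proof.
move=> ap Cy; apply: sup_upper_bound; last by exists y.
split; first by exists (- dotv (F x) (y - x) - alpha / 2 * enorm (y - x) ^+ 2), y.
exists (enorm (F x) ^+ 2 / (2 * alpha)) => _ [c Cc <-].
rewrite ler_pdivlMr ?mulr_gt0 //.
have := CSN (F x) (c - x); have := enorm_ge0 (F x); have := enorm_ge0 (c - x).
set d := dotv _ _; set a := enorm (F x); set b := enorm (c - x).
move=> hb ha hd.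
have -> : (- d - alpha / 2 * b ^+ 2) * (2 * alpha) = - 2 * alpha * d - (alpha * b) ^+ 2.
  by field.
have h1 : - 2 * alpha * d <= 2 * alpha * (a * b) by nra.
have := sqr_ge0 (a - alpha * b); nra.
Qed.

Lemma step1_lemma {R : realType} {n : nat} (e w u Phi : 'cV[R]_n) (c s a : R) :
  0 <= c -> 0 <= s -> 0 <= a -> enorm e <= c * s -> dotv e (Phi + u) <= c * s ^+ 2 ->
  dotv (e - Phi) (e - w) <= 0 -> enorm w = a -> enorm u = s ->
  dotv Phi w <= c * s * a + 2 * c * s ^+ 2.
Proof.
move=> c0 s0 a0 h1 h2 h3 ea es.
have c1 := CS e w. have c2 := CSN e u. rewrite ea es in c1 c2.
have ee0 := dotv_ge0 e. have en0 := enorm_ge0 e.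
rewrite !(dotvBl, dotvBr, dotvDr) (dotvC Phi e) in h3 h2.
have : enorm e * a <= c * s * a by apply: ler_wpM2r.
have : enorm e * s <= c * s * s by apply: ler_wpM2r.
nra.
Qed.

Lemma arith0 {R : realType} (d1 d2 d3 d4 d5 g mk rm s a eta eps0 L2 mu : R) :
  0 <= s -> 0 <= a ->
  d1 + d2 + d3 + d4 + mk * d5 + g <= rm * s * a + 2 * rm * s ^+ 2 ->
  - d1 <= eta * eps0 * a -> mu * a ^+ 2 <= d2 -> - d3 <= L2 * eps0 * s * a ->
  - d4 <= eta / 4 * s * a -> - (mk * d5) <= mk * s * a ->
  L2 * eps0 + eta / 4 + mk + rm <= eta -> 2 * rm <= eta ->
  g + mu * a ^+ 2 <= eta * eps0 * a + eta * (s * a) + eta * s ^+ 2.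
Proof.
move=> s0 a0 h b1 b2 b3 b4 b5 cf cf2.
have sa0 : 0 <= s * a by rewrite mulr_ge0.
have m1a := ler_wpM2r sa0 cf.
have m1b := ler_wpM2r (sqr_ge0 s) cf2.
lra.
Qed.

Lemma arith1 {R : realType} (eta mu eps0 a s g : R) :
  0 <= eps0 -> 0 <= a -> 0 <= s -> 0 <= g -> 0 < eta -> eta <= mu / 8 -> 0 < mu ->
  s <= a + eps0 -> g + mu * a ^+ 2 <= eta * eps0 * a + eta * (s * a) + eta * s ^+ 2 ->
  g + mu / 2 * a ^+ 2 <= 3 * eta * eps0 ^+ 2 /\ a <= eps0.
Proof.
move=> e0 a0 s0 g0 etap eta1 mup tri main1.
have h_sa : s * a <= (a + eps0) * a by apply: ler_wpM2r.
have h_ss : s ^+ 2 <= (a + eps0) ^+ 2 by rewrite lerXn2r ?nnegrE // addr_ge0.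
have h_ea : 2 * eps0 * a <= a ^+ 2 + eps0 ^+ 2 by have := sqr_ge0 (a - eps0); nra.
have etag := ltW etap.
have q4 := ler_wpM2l etag h_sa; have q3 := ler_wpM2l etag h_ss; have q2 := ler_wpM2l etag h_ea.
have q0 : 0 <= mu / 2 - 4 * eta by lra.
have q1 := mulr_ge0 q0 (sqr_ge0 a).
have main2 : g + mu / 2 * a ^+ 2 <= 3 * eta * eps0 ^+ 2 by nra.
split => //.
apply: sq_le => //.
have hq : 3 * eta * eps0 ^+ 2 <= 3 * (mu / 8) * eps0 ^+ 2.
  by apply: ler_wpM2r; [exact: sqr_ge0 | lra].
have hme := mulr_ge0 (ltW mup) (sqr_ge0 eps0).
have : mu / 2 * a ^+ 2 <= mu / 2 * eps0 ^+ 2 by lra.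
by rewrite ler_pM2l //; lra.
Qed.

Lemma arith2 {R : realType} (mz mx g K a eta P gamma mu eps0 : R) :
  mz <= g + K * a ^+ 2 -> g + mu / 2 * a ^+ 2 <= 3 * eta * eps0 ^+ 2 ->
  eta * (8 * (mu + 2 * K)) = gamma * P * mu -> P * eps0 ^+ 2 <= mx ->
  0 <= K -> 0 < mu -> 0 <= gamma -> 0 <= g -> 0 <= P ->
  mz <= gamma * mx.
Proof.
move=> hz m2 etaE hx K0 mup gg0 g0 P0.
have ha : mu * a ^+ 2 <= 6 * eta * eps0 ^+ 2 by lra.
have hK := ler_wpM2l K0 ha.
have hE : eta * (8 * (mu + 2 * K)) * eps0 ^+ 2 = gamma * P * mu * eps0 ^+ 2 by rewrite etaE.
have hg : mu * g <= mu * (3 * eta * eps0 ^+ 2) - mu * (mu / 2 * a ^+ 2).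
  by rewrite -mulrBr; apply: ler_wpM2l; [exact: ltW | lra].
have hx' := ler_wpM2l gg0 hx.
have f1 : mu * mz <= mu * (g + K * a ^+ 2) by apply: ler_wpM2l => //; exact: ltW.
have f2 : mu * mz <= mu * (gamma * mx).
  have h38 : 0 <= gamma * P * mu * eps0 ^+ 2.
    apply: mulr_ge0; last exact: sqr_ge0.
    apply: mulr_ge0; last exact: ltW.
    exact: mulr_ge0.
  have hm := ler_wpM2l (ltW mup) hx'.
  have hsq := mulr_ge0 (ltW mup) (sqr_ge0 a).
  have hsq2 := mulr_ge0 (ltW mup) hsq.
  have c1 : mu * mz <= mu * g + K * (mu * a ^+ 2).
    move: f1; rewrite mulrDr; set u := mu * (K * _); set v := K * (mu * _).
    have -> : u = v by rewrite /u /v mulrA (mulrC mu K) -mulrA.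
    by [].
  have c2 : mu * g <= mu * (3 * eta * eps0 ^+ 2) by lra.
  have c3 : 8 * (mu * (3 * eta * eps0 ^+ 2) + K * (6 * eta * eps0 ^+ 2)) = 3 * (gamma * P * mu * eps0 ^+ 2).
    rewrite -hE; ring.
  have c4 : mu * (gamma * (P * eps0 ^+ 2)) = gamma * P * mu * eps0 ^+ 2 by ring.
  set X1 := mu * mz in c1 *. set X2 := mu * g in c1 c2. set X3 := K * (mu * a ^+ 2) in c1 hK.
  set X4 := mu * (3 * eta * eps0 ^+ 2) in c2 c3. set X5 := K * (6 * eta * eps0 ^+ 2) in hK c3.
  set X6 := gamma * P * mu * eps0 ^+ 2 in c3 c4 h38.
  set X7 := mu * (gamma * (P * eps0 ^+ 2)) in c4 hm.
  clear -c1 c2 hK c3 c4 h38 hm.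
  lra.
by rewrite ler_pM2l in f2.
Qed.

Theorem mainTheorem6 (R : realType) (n : nat) (C : set 'cV[R]_n)
  (F : 'cV[R]_n -> 'cV[R]_n) (JF : 'cV[R]_n -> 'M[R]_n) (xs : 'cV[R]_n)
  (X : set 'cV[R]_n) (L1 L2 mu : R)
  (x : nat -> 'cV[R]_n) (B : nat -> 'M[R]_n) (muk rho dlt : nat -> R)
  (z zh : nat -> 'cV[R]_n) (D C1 C2 alpha gamma : R) :
  (* C nonempty closed convex *)
  (exists c, C c) -> closed_set C -> convex_set C ->
  (* F continuously differentiable with Jacobian JF *)
  (forall y, forall eps : R, 0 < eps -> exists2 d : R, 0 < d &
     forall w, enorm (w - y) < d ->
       enorm (F w - F y - JF y *m (w - y)) <= eps * enorm (w - y)) ->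
  (forall y, forall eps : R, 0 < eps -> exists2 d : R, 0 < d &
     forall w, enorm (w - y) < d -> opnorm (JF w - JF y) < eps) ->
  is_VIP_sol F C xs ->
  (* X a neighborhood of xs *)
  (exists2 r : R, 0 < r & forall y, enorm (y - xs) < r -> X y) ->
  0 < L1 -> 0 < L2 -> 0 < mu ->
  (forall y w, X y -> X w -> enorm (F y - F w) <= L1 * enorm (y - w)) ->
  (forall y w, X y -> X w -> opnorm (JF y - JF w) <= L2 * enorm (y - w)) ->
  (forall y d, X y -> dotv (JF y *m d) d >= mu * enorm d ^+ 2) ->
  (* the sequences *)
  (forall k, C (x k)) ->
  (forall eps : R, 0 < eps -> exists N, forall k, (N <= k)%N -> enorm (x k - xs) < eps) ->
  (forall k, 0 < muk k) -> (forall k, 0 <= rho k) -> (forall k, 0 < dlt k) ->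
  (forall k, C (z k)) ->
  (forall k, enorm (z k - projC C (z k - linmap F (x k) (B k) (muk k) (z k)))
             <= rho k * muk k * enorm (z k - x k)) ->
  (forall k, dotv (z k - projC C (z k - linmap F (x k) (B k) (muk k) (z k)))
                  (linmap F (x k) (B k) (muk k) (z k) + z k - x k)
             <= rho k * muk k * enorm (z k - x k) ^+ 2) ->
  (forall k, is_VIP_sol (linmap F (x k) (B k) (muk k)) C (zh k)) ->
  0 < D -> 0 < C1 -> 0 < C2 ->
  (* mu_k = O(r_k) *)
  (exists M : R, exists N, forall k, (N <= k)%N -> muk k <= M * residual F C (x k)) ->
  (* rho_k -> 0 *)
  (forall eps : R, 0 < eps -> exists N, forall k, (N <= k)%N -> rho k < eps) ->
  (exists N, forall k, (N <= k)%N ->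
     opnorm (B k - JF (x k)) <= D /\
     muk k <= C1 * enorm (x k - xs) /\
     (forall d : 'cV[R]_n, d != 0 -> 0 < dotv ((B k + (muk k)%:M) *m d) d) /\
     (1 + opnorm (B k + (muk k)%:M)) / min_eig_sym (B k + (muk k)%:M) <= C2 /\
     enorm ((B k - JF (x k)) *m (z k - x k)) <= dlt k * enorm (z k - x k) /\
     muk k < mu / 2 /\
     dlt k <= mu / 16) ->
  strongly_monotone_on F C mu ->
  0 < alpha -> alpha < 2 * mu ->
  0 < gamma -> gamma < 1 ->
  exists2 delta : R, 0 < delta < mu / 16 &
    exists2 eps : R, 0 < eps &
      exists N, forall k, (N <= k)%N -> enorm (x k - xs) < eps -> dlt k <= delta ->
        merit F C alpha (z k) <= gamma * merit F C alpha (x k).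
Proof.
move=> neC clC cvC Fdiff Jcont [hxsC hxsvi] [r rp hX] L1p L2p mup LipF LipJ monJ
  Cx xcv mukp rhop dltp Cz hyp1 hyp2 zhsol Dp C1p C2p _ rhocv [N0 hN0] smon
  ap a2 gp g1.
pose K := L1 ^+ 2 / (2 * alpha).
have K0 : 0 <= K by rewrite divr_ge0 ?sqr_ge0 // mulr_ge0 // ltW.
pose P := mu - alpha / 2.
have Pp : 0 < P by rewrite /P; lra.
pose eta := gamma * P * mu / (8 * (mu + 2 * K)).
have den : 0 < 8 * (mu + 2 * K) by lra.
have etaE : eta * (8 * (mu + 2 * K)) = gamma * P * mu by rewrite /eta mulfVK // gt_eqF.
have etap : 0 < eta by rewrite /eta divr_gt0 // !mulr_gt0.
have eta1 : eta <= mu / 8.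
  have : gamma * P * mu <= mu * (mu + 2 * K).
    have h1 : gamma * P <= mu + 2 * K by rewrite /P; nra.
    nra.
  nra.
have [d1 d1p hd1] := Fdiff xs eta etap.
have [N1 hN1] := rhocv 1 ltr01.
exists (eta / 4); first by apply/andP; split; lra.
pose eps := Order.min (Order.min r d1) (Order.min (eta / (4 * L2)) (eta / (4 * C1))).
have epsp : 0 < eps.
  rewrite /eps !lt_min rp d1p /=; apply/andP; split; apply: divr_gt0 => //; lra.
exists eps => //.
have := le_refl eps; rewrite {2}/eps !le_min => /andP[/andP[er ed1] /andP[eL2 eC1]].
rewrite ler_pdivlMr ?mulr_gt0 // in eL2.
rewrite ler_pdivlMr ?mulr_gt0 // in eC1.
exists (maxn N0 N1) => k hk hxk hdk.
have [hD [hmuC [hpd [hC2 [hBJ [hmu2 hdl16]]]]]] := hN0 k (leq_trans (leq_maxl _ _) hk).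
have hrho := hN1 k (leq_trans (leq_maxr _ _) hk).
set eps0 := enorm (x k - xs) in hxk hmuC.
have e0 : 0 <= eps0 := enorm_ge0 _.
have Xx : X (x k) by apply: hX; exact: (lt_le_trans hxk er).
have Xs : X xs by apply: hX; rewrite subrr enorm0.
have mk := mukp k. have rk := rhop k.
set Phi := linmap F (x k) (B k) (muk k) (z k).
have [CP VI] := proj_vi C (z k - Phi) neC clC cvC.
set Pj := projC C (z k - Phi) in CP VI hyp1 hyp2.
have h1 := hyp1 k; have h2 := hyp2 k; have h3 := VI xs hxsC.
rewrite -/Phi in h1 h2.
set s := enorm (z k - x k) in h1 h2.
set a := enorm (z k - xs).
have s0 : 0 <= s := enorm_ge0 _. have a0 : 0 <= a := enorm_ge0 _.
have v1 : z k - Phi - Pj = (z k - Pj) - Phi.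
  by apply/matrixP => i j; rewrite !mxE; ring.
have v2 : xs - Pj = (z k - Pj) - (z k - xs).
  by apply/matrixP => i j; rewrite !mxE; ring.
have v3 : Phi + z k - x k = Phi + (z k - x k) by rewrite addrA.
rewrite v1 v2 in h3. rewrite v3 in h2.
rewrite -/Pj in h1 h2.
have step1 := @step1_lemma _ _ _ _ _ _ _ _ _ (mulr_ge0 rk (ltW mk)) s0 a0 h1 h2 h3 erefl erefl.
set rm := rho k * muk k in step1.
have rmle : rm <= muk k.
  by rewrite /rm -[X in _ <= X]mul1r; apply: ler_wpM2r; [exact: ltW | exact: ltW].
have rm0 : 0 <= rm by rewrite /rm mulr_ge0 // ltW.
have vid : Phi = (F (x k) - F xs - JF xs *m (x k - xs)) + JF xs *m (z k - xs)
   + (JF (x k) - JF xs) *m (z k - x k) + (B k - JF (x k)) *m (z k - x k)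
   + muk k *: (z k - x k) + F xs.
  rewrite /Phi /linmap !(mulmxBr, mulmxBl, mulmxDl, mulmxDr) !mul_scalar_mx.
  by apply/matrixP => i j; rewrite !mxE; ring.
have b1 : - dotv (F (x k) - F xs - JF xs *m (x k - xs)) (z k - xs) <= eta * eps0 * a.
  apply: le_trans (CSN _ _) _; rewrite -/a; apply: ler_wpM2r => //.
  by apply: hd1; exact: (lt_le_trans hxk ed1).
set r1v := F (x k) - F xs - JF xs *m (x k - xs) in vid b1.
clearbody r1v.
rewrite vid !dotvDl dotvZl in step1.
have b2 : mu * a ^+ 2 <= dotv (JF xs *m (z k - xs)) (z k - xs) by apply: monJ.
have b3 : - dotv ((JF (x k) - JF xs) *m (z k - x k)) (z k - xs) <= L2 * eps0 * s * a.
  apply: le_trans (CSN _ _) _; rewrite -/a; apply: ler_wpM2r => //.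
  apply: le_trans (opnorm_le _ _) _; rewrite -/s; apply: ler_wpM2r => //.
  exact: LipJ.
have b4 : - dotv ((B k - JF (x k)) *m (z k - x k)) (z k - xs) <= eta / 4 * s * a.
  apply: le_trans (CSN _ _) _; rewrite -/a; apply: ler_wpM2r => //.
  apply: le_trans hBJ _; rewrite -/s; apply: ler_wpM2r => //.
have b5 : - (muk k * dotv (z k - x k) (z k - xs)) <= muk k * s * a.
  rewrite -mulrN -mulrA; apply: ler_wpM2l; first exact: ltW.
  exact: CSN.
have b6 : 0 <= dotv (F xs) (z k - xs) by apply: hxsvi.
set g := dotv (F xs) (z k - xs) in b6 step1.
have tri : s <= a + eps0.
  rewrite /s /a /eps0 (enormB (x k)).
  have -> : z k - x k = (z k - xs) + (xs - x k) by rewrite addrA subrK.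
  exact: enormD.
have cf : L2 * eps0 + eta / 4 + muk k + rm <= eta.
  have u1 : L2 * eps0 <= L2 * eps by apply: ler_wpM2l; [exact: ltW | exact: ltW].
  have u2 : C1 * eps0 <= C1 * eps by apply: ler_wpM2l; [exact: ltW | exact: ltW].
  clear -u1 u2 eL2 eC1 hmuC rmle; lra.
have cf2 : 2 * rm <= eta.
  have u0 := mulr_ge0 (ltW L2p) e0.
  clear -u0 cf rmle etap; lra.
have main1 := arith0 _ _ _ _ _ _ _ _ _ _ _ _ _ _ s0 a0 step1 b1 b2 b3 b4 b5 cf cf2.
have [main2 aeps] := arith1 _ _ _ _ _ _ e0 a0 s0 b6 etap eta1 mup tri main1.
have Xz : X (z k) by apply: hX; rewrite -/a; exact: (le_lt_trans aeps (lt_le_trans hxk er)).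
have mz : merit F C alpha (z k) <= g + K * a ^+ 2.
  apply: merit_le => // y Cy.
  have id4 : - dotv (F (z k)) (y - z k) = - dotv (F (z k) - F xs) (y - z k)
      - dotv (F xs) (y - xs) + dotv (F xs) (z k - xs).
    by rewrite !(dotvBl, dotvBr); ring.
  rewrite id4 -/g.
  have := enorm_ge0 (y - z k); set b := enorm (y - z k) => b0.
  have p1 : - dotv (F (z k) - F xs) (y - z k) <= L1 * a * b.
    apply: le_trans (CSN _ _) _; apply: ler_wpM2r; first exact: enorm_ge0.
    exact: LipF.
  have p2 := hxsvi y Cy.
  have KE : K * (2 * alpha) = L1 ^+ 2 by rewrite /K mulfVK // gt_eqF // mulr_gt0.
  have hs := sqr_ge0 (L1 * a - alpha * b).
  have hKa : K * (2 * alpha) * a ^+ 2 = L1 ^+ 2 * a ^+ 2 by rewrite KE.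
  have key : (L1 * a * b - alpha / 2 * b ^+ 2) * (2 * alpha) <= (K * a ^+ 2) * (2 * alpha).
    have -> : (L1 * a * b - alpha / 2 * b ^+ 2) * (2 * alpha) = 2 * alpha * L1 * a * b - (alpha * b) ^+ 2.
      by field.
    clear -hs hKa; lra.
  rewrite ler_pM2r ?mulr_gt0 // in key.
  move: p1 p2 key; move: (dotv (F (z k) - F xs) (y - z k)) (dotv (F xs) (y - xs)) => q1 q2.
  clear; move=> p1 p2 key; lra.
have mx : P * eps0 ^+ 2 <= merit F C alpha (x k).
  have := merit_ge F C alpha (x k) xs ap hxsC.
  have id5 : - dotv (F (x k)) (xs - x k) = dotv (F (x k) - F xs) (x k - xs)
      + dotv (F xs) (x k - xs).
    by rewrite !(dotvBl, dotvBr); ring.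
  rewrite id5 (enormB xs) -/eps0.
  have := smon (x k) xs (Cx k) hxsC; rewrite -/eps0.
  have := hxsvi (x k) (Cx k).
  move: (dotv (F (x k) - F xs) (x k - xs)) (dotv (F xs) (x k - xs)) (merit F C alpha (x k)) => q1 q2 q3.
  rewrite /P; clear; lra.
exact: (arith2 _ _ _ _ _ _ _ _ _ _ mz main2 etaE mx K0 mup (ltW gp) b6 (ltW Pp)).
Qed.
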